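(* Let $\mathcal V$ be a variety of algebras of type $F$. The variety $\mathcal V_\tau$ satisfies the Congruence Extension Property if and only if $\mathcal V$ satisfies the Congruence Extension Property.
   Context: A state-morphism on an algebra $\mathbf A$ of type $F$ is an endomorphism $\tau$ of $\mathbf A$ with $\tau\circ\tau=\tau$; $(\mathbf A,\tau)$ is a state-morphism algebra (type $F$ plus one unary operation), and $\mathcal V_\tau$ is the variety of all state-morphism algebras $(\mathbf A,\tau)$ with $\mathbf A\in\mathcal V$. An algebra $\mathbf B$ has the Congruence Extension Property (CEP) if for every algebra $\mathbf A$ having $\mathbf B$ as a subalgebra and every congruence $\theta$ of $\mathbf B$ there is a congruence $\phi$ of $\mathbf A$ with $\theta=(B\times B)\cap\phi$; a variety has the CEP if all its members have it. *)

(* Defs.v *)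
From mathcomp Require Import all_boot.
Set Implicit Arguments. Unset Strict Implicit. Unset Printing Implicit Defensive.

Record signature := Signature {
  op_sym : Type;
  arity : op_sym -> nat
}.

Record algebra (S : signature) := Algebra {
  carrier :> Type;
  interp : forall f : op_sym S, ('I_(arity f) -> carrier) -> carrier
}.
Arguments interp {S} a f _ : rename.

Definition is_hom (S : signature) (A B : algebra S) (h : A -> B) : Prop :=
  forall (f : op_sym S) (a : 'I_(arity f) -> A),
    h (interp A f a) = interp B f (fun i => h (a i)).

(** B is (isomorphic to) a subalgebra of A: an injective homomorphism B -> A. *)
Definition is_embedding (S : signature) (B A : algebra S) (e : B -> A) : Prop :=
  is_hom e /\ (forall x y, e x = e y -> x = y).

Definition is_congruence (S : signature) (A : algebra S) (th : A -> A -> Prop)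
  : Prop :=
  [/\ (forall x, th x x),
      (forall x y, th x y -> th y x),
      (forall x y z, th x y -> th y z -> th x z) &
      (forall (f : op_sym S) (a b : 'I_(arity f) -> A),
          (forall i, th (a i) (b i)) -> th (interp A f a) (interp A f b))].

Inductive term (S : signature) : Type :=
  | Var : nat -> term S
  | App : forall f : op_sym S, ('I_(arity f) -> term S) -> term S.

Fixpoint eval_term (S : signature) (A : algebra S) (v : nat -> A) (t : term S)
  : A :=
  match t with
  | Var n => v n
  | App f args => interp A f (fun i => eval_term v (args i))
  end.

Definition satisfies (S : signature) (A : algebra S) (e : term S * term S)
  : Prop := forall v : nat -> A, eval_term v e.1 = eval_term v e.2.

(** A variety: a class of algebras of type S defined by a set of identities
    (equivalently, by Birkhoff's theorem, closed under H, S, P). *)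
Definition is_variety (S : signature) (V : algebra S -> Prop) : Prop :=
  exists E : term S * term S -> Prop,
    forall A : algebra S, V A <-> (forall e, E e -> satisfies A e).

Definition CEP_alg (S : signature) (K : algebra S -> Prop) (B : algebra S)
  : Prop :=
  forall (A : algebra S) (e : B -> A), K A -> is_embedding e ->
  forall th : B -> B -> Prop, is_congruence th ->
  exists phi : A -> A -> Prop, is_congruence phi /\
    (forall x y : B, th x y <-> phi (e x) (e y)).

Definition CEP (S : signature) (K : algebra S -> Prop) : Prop :=
  forall B : algebra S, K B -> CEP_alg K B.

Definition sig_tau (S : signature) : signature :=
  {| op_sym := option (op_sym S);
     arity := fun o => match o with Some f => arity f | None => 1%N end |}.

Definition reduct (S : signature) (A : algebra (sig_tau S)) : algebra S :=
  {| carrier := carrier A;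
     interp := fun f a => @interp (sig_tau S) A (Some f) a |}.

Definition tau_op (S : signature) (A : algebra (sig_tau S)) (x : A) : A :=
  @interp (sig_tau S) A None (fun _ => x).

Definition is_state_morphism (S : signature) (A : algebra S) (t : A -> A)
  : Prop := @is_hom S A A t /\ (forall x, t (t x) = t x).

Definition V_tau (S : signature) (V : algebra S -> Prop)
  (A : algebra (sig_tau S)) : Prop :=
  V (reduct A) /\ @is_state_morphism S (reduct A) (@tau_op S A).

(* Main.v *)
Require Import Defs.
From mathcomp Require Import all_boot.
From Stdlib Require Import FunctionalExtensionality.

Definition idext {S : signature} (B : algebra S) : algebra (sig_tau S) :=
  @Algebra (sig_tau S) B
    (fun o => match o return ('I_(@arity (sig_tau S) o) -> B) -> B with
              | Some f => interp B f
              | None => fun a => a ord0 end).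

Lemma fun1_eq (T : Type) (a : 'I_1 -> T) : (fun _ => a ord0) = a.
Proof.
  apply: functional_extensionality => i; congr (a _); apply: val_inj => /=.
  by case: i => [[|n] Hn].
Qed.

Theorem theorem4p7 (S : signature) (V : algebra S -> Prop) :
  is_variety V -> (CEP (V_tau V) <-> CEP V).
Proof.
  move=> _; split.
  - move=> H B VB A e VA [eh ei] th [r1 r2 r3 r4].
    have VB' : V_tau V (idext B) by case: B VB {e ei eh th r1 r2 r3 r4} => c i VB; split.
    have VA' : V_tau V (idext A) by case: A VA {e ei eh} => c i VA; split.
    have emb : @is_embedding (sig_tau S) (idext B) (idext A) e.
      split=> //; case=> [f|] a //=; exact: eh.
    have cth : @is_congruence (sig_tau S) (idext B) th.
      split=> //; case=> [f|] a b hab /=; [exact: r4 | exact: hab].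
    have [phi [[p1 p2 p3 p4] ext]] := H _ VB' (idext A) e VA' emb th cth.
    exists phi; split=> //; split=> // f a b hab; exact: (p4 (Some f) a b hab).
  - move=> H B [VB [tBh tBi]] A e [VA [tAh tAi]] [eh ei] th [r1 r2 r3 r4].
    have emb : @is_embedding S (reduct B) (reduct A) e.
      split=> // f a; exact: (eh (Some f) a).
    have cth : @is_congruence S (reduct B) th.
      split=> // f a b hab; exact: (r4 (Some f) a b hab).
    have [phi0 [[p1 p2 p3 p4] ext]] := H _ VB (reduct A) e VA emb th cth.
    have etau : forall x, e (tau_op x) = tau_op (e x).
      by move=> x; rewrite /tau_op (eh None (fun _ => x)).
    exists (fun x y => phi0 x y /\ phi0 (tau_op x) (tau_op y)); split.
      split.
      + by move=> x; split.
      + by move=> x y [h1 h2]; split; apply: p2.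
      + by move=> x y z [h1 h2] [h3 h4]; split; [apply: (p3 _ y) | apply: (p3 _ (tau_op y))].
      + case=> [f|] a b hab.
        * split; first by apply: (p4 f) => i; case: (hab i).
          have := tBh f; move: (tAh f a) (tAh f b) => /= -> ->.
          by move=> _; apply: (p4 f) => i; case: (hab i).
        * move: a b hab => /= a b hab; rewrite -(@fun1_eq _ a) -(@fun1_eq _ b).
          case: (hab ord0) => h1 h2; split; first exact: h2.
          change (phi0 (tau_op (tau_op (a ord0))) (tau_op (tau_op (b ord0)))); by rewrite !tAi.
    move=> x y; split.
    + move=> hxy; split; first by apply/ext.
      rewrite -!etau; apply/ext; exact: (r4 None (fun _ => x) (fun _ => y)).
    + by case=> h _; apply/ext.
Qed.
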